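(* Let $(P,r)$ and $(\overline P,r)$ be MDPs on the same finite state and action spaces with rewards in $[0,1]$. Suppose there exist $m,\beta>1$, $\gamma\in(0,1)$ and a policy $\pi$ such that $$\|V^{\pi^\star_\gamma}_\gamma-\overline V^{\pi^\star_\gamma}_\gamma\|_\infty\le\frac{\beta}{1-\gamma}\sqrt{\frac{\|V^{\pi^\star_\gamma}_\gamma\|_{\mathrm{sp}}+1}{m}},\qquad \overline V^\pi_\gamma\ge\overline V^\star_\gamma-\frac1m\mathbf 1,\qquad \|\overline V^\pi_\gamma-V^\pi_\gamma\|_\infty\le\frac{\beta}{1-\gamma}\sqrt{\frac{\|\overline V^\pi_\gamma\|_{\mathrm{sp}}+1}{m}}.$$ Then $$\|\overline V^\star_\gamma-V^\star_\gamma\|_\infty\le\frac{2\beta^2}{(1-\gamma)^2m}+\frac{4\beta}{1-\gamma}\sqrt{\frac{\|V^\star_\gamma\|_{\mathrm{sp}}+1+\frac1m}{m}}+\frac4m$$ and $$\|\overline V^\star_\gamma-V^\star_\gamma\|_\infty\le\frac{2\beta^2}{(1-\gamma)^2m}+\frac{4\beta}{1-\gamma}\sqrt{\frac{\|\overline V^\star_\gamma\|_{\mathrm{sp}}+1+\frac1m}{m}}+\frac4m.$$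
   Context: $V^{\pi'}_\gamma$, $V^\star_\gamma$ are the discounted value of policy $\pi'$ and optimal value in the DMDP $(P,r,\gamma)$, with $\pi^\star_\gamma$ an optimal policy of it; $\overline V^{\pi'}_\gamma,\overline V^\star_\gamma$ are the analogous quantities in $(\overline P,r,\gamma)$. $V^\pi_\gamma(s)=\mathbb{E}^\pi_s[\sum_{t\ge0}\gamma^tr(S_t,A_t)]$. $\|x\|_{\mathrm{sp}}=\max_sx(s)-\min_sx(s)$. *)

(* Defs.v *)
From HB Require Import structures.
From mathcomp Require Import all_boot all_order all_algebra.
From mathcomp Require Import all_classical all_reals all_analysis.
Set Implicit Arguments. Unset Strict Implicit. Unset Printing Implicit Defensive.
Import Order.TTheory GRing.Theory Num.Theory.
Local Open Scope ring_scope.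
Local Open Scope classical_set_scope.

Section MDP.
Variables (R : realType) (S A : finType).

(* transition kernel P s a s' : probability of moving to s' from s under a *)
Definition is_kernel (P : S -> A -> S -> R) : Prop :=
  forall s a, (forall s', 0 <= P s a s') /\ \sum_(s' : S) P s a s' = 1.

Definition reward01 (r : S -> A -> R) : Prop :=
  forall s a, 0 <= r s a <= 1.

(* stationary (possibly randomized) Markov policy: pi s a = prob. of a in s *)
Definition is_policy (pi : S -> A -> R) : Prop :=
  forall s, (forall a, 0 <= pi s a) /\ \sum_(a : A) pi s a = 1.

Definition Ppi (P : S -> A -> S -> R) (pi : S -> A -> R) (f : S -> R) : S -> R :=
  fun s => \sum_(a : A) pi s a * \sum_(s' : S) P s a s' * f s'.

Definition rpi (r : S -> A -> R) (pi : S -> A -> R) : S -> R :=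
  fun s => \sum_(a : A) pi s a * r s a.

(* discounted value V^pi_gamma(s) = E^pi_s [ sum_t gamma^t r(S_t, A_t) ]
   = sum_t gamma^t (P_pi^t r_pi)(s) *)
Definition Vpi (P : S -> A -> S -> R) (r : S -> A -> R) (gamma : R)
  (pi : S -> A -> R) : S -> R :=
  fun s => limn (fun n => \sum_(t < n) gamma ^+ t * iter t (Ppi P pi) (rpi r pi) s).

Definition Vstar (P : S -> A -> S -> R) (r : S -> A -> R) (gamma : R) : S -> R :=
  fun s => sup [set Vpi P r gamma pi s | pi in is_policy].

Definition is_optimal (P : S -> A -> S -> R) (r : S -> A -> R) (gamma : R)
  (pi : S -> A -> R) : Prop :=
  is_policy pi /\ forall s, Vpi P r gamma pi s = Vstar P r gamma s.

Definition supnorm (x : S -> R) : R := \big[Num.max/0]_(s : S) `|x s|.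

Definition spnorm (x : S -> R) : R := sup (range x) - inf (range x).

End MDP.

(* Main.v *)
Require Import Defs.
From HB Require Import structures.
From mathcomp Require Import all_boot all_order all_algebra.
From mathcomp Require Import all_classical all_reals all_analysis.
From mathcomp Require Import ring lra.
Import Order.TTheory GRing.Theory Num.Theory.
Set Implicit Arguments. Unset Strict Implicit.
Local Open Scope ring_scope.
Local Open Scope classical_set_scope.

Section Aux.
Variables (R : realType) (S A : finType).

Lemma Ppi01 (P : S -> A -> S -> R) (pi : S -> A -> R) (f : S -> R) :
  is_kernel P -> is_policy pi -> (forall s, 0 <= f s <= 1) ->
  forall s, 0 <= Ppi P pi f s <= 1.
Proof.
move=> HP Hpi Hf s; rewrite /Ppi.
have inner a : 0 <= \sum_(s' : S) P s a s' * f s' <= 1.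
  apply/andP; split.
    apply: sumr_ge0 => s' _; apply: mulr_ge0; first exact: (HP s a).1 s'.
    by case/andP: (Hf s').
  rewrite -(HP s a).2; apply: ler_sum => s' _; rewrite -[leRHS]mulr1.
  apply: ler_wpM2l; first exact: (HP s a).1. by case/andP: (Hf s').
apply/andP; split.
  apply: sumr_ge0 => a _; apply: mulr_ge0; first exact: (Hpi s).1 a.
  by case/andP: (inner a).
rewrite -(Hpi s).2; apply: ler_sum => a _; rewrite -[leRHS]mulr1.
apply: ler_wpM2l; first exact: (Hpi s).1. by case/andP: (inner a).
Qed.

Lemma rpi01 (r : S -> A -> R) (pi : S -> A -> R) :
  reward01 r -> is_policy pi -> forall s, 0 <= rpi r pi s <= 1.
Proof.
move=> Hr Hpi s; rewrite /rpi; apply/andP; split.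
  apply: sumr_ge0 => a _; apply: mulr_ge0; first exact: (Hpi s).1 a.
  by case/andP: (Hr s a).
rewrite -(Hpi s).2; apply: ler_sum => a _; rewrite -[leRHS]mulr1.
apply: ler_wpM2l; first exact: (Hpi s).1. by case/andP: (Hr s a).
Qed.

Lemma iter01 (P : S -> A -> S -> R) (r : S -> A -> R) (pi : S -> A -> R) t :
  is_kernel P -> reward01 r -> is_policy pi ->
  forall s, 0 <= iter t (Ppi P pi) (rpi r pi) s <= 1.
Proof.
move=> HP Hr Hpi; elim: t => [|t IH] /=; first exact: rpi01.
exact: Ppi01.
Qed.

Lemma geom_bound (g : R) (x : nat -> R) :
  0 <= g < 1 -> (forall t, 0 <= x t <= 1) ->
  forall n, (\sum_(t < n) g ^+ t * x t) * (1 - g) <= 1 - g ^+ n.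
Proof.
move=> /andP[g0 g1] Hx; elim => [|n IH]; first by rewrite big_ord0 expr0 mul0r subrr.
rewrite big_ord_recr /= exprS.
have gn : 0 <= g ^+ n by apply: exprn_ge0.
have := Hx n => /andP[x0 x1].
set Sn := \sum_(i < n) _ in IH *.
have h : 0 <= g ^+ n * (1 - g) by apply: mulr_ge0 => //; rewrite subr_ge0 ltW.
nra.
Qed.

Lemma Vpi_ub (P : S -> A -> S -> R) (r : S -> A -> R) (g : R) (pi : S -> A -> R) :
  is_kernel P -> reward01 r -> is_policy pi -> 0 < g < 1 ->
  forall s, Vpi P r g pi s <= 1 / (1 - g).
Proof.
move=> HP Hr Hpi /andP[g0 g1] s; rewrite /Vpi.
set u := fun n => _.
have x01 := fun t => iter01 t HP Hr Hpi s.
have Hg' : 0 <= g < 1 by rewrite ltW.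
have ub n : u n <= 1 / (1 - g).
  rewrite ler_pdivlMr ?subr_gt0 //.
  apply: le_trans (@geom_bound g _ Hg' x01 n) _.
  by rewrite lerBlDr lerDl exprn_ge0 // ltW.
have nd : nondecreasing_seq u.
  apply/nondecreasing_seqP => n; rewrite /u big_ord_recr /= lerDl.
  apply: mulr_ge0; [apply: exprn_ge0; exact: ltW|by case/andP: (x01 n)].
have hub : has_ubound (range u) by exists (1 / (1 - g)) => _ [n _ <-].
have -> : limn u = sup (range u) by apply: cvg_lim => //; exact: nondecreasing_cvgn.
apply: ge_sup; first by exists (u 0%N), 0%N.
by move=> _ [n _ <-].
Qed.

Lemma Vpi_le_Vstar (P : S -> A -> S -> R) (r : S -> A -> R) (g : R) (pi : S -> A -> R) :
  is_kernel P -> reward01 r -> is_policy pi -> 0 < g < 1 ->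
  forall s, Vpi P r g pi s <= Vstar P r g s.
Proof.
move=> HP Hr Hpi Hg s; rewrite /Vstar.
apply: ub_le_sup; last by exists pi.
exists (1 / (1 - g)) => _ [p Hp <-]; exact: Vpi_ub.
Qed.

Lemma le_supnorm (x : S -> R) s : `|x s| <= supnorm x.
Proof. rewrite /supnorm; exact: (le_bigmax (0:R) (fun s => `|x s|) s). Qed.

Lemma supnorm_le (x : S -> R) c : 0 <= c -> (forall s, `|x s| <= c) -> supnorm x <= c.
Proof. by move=> c0 H; rewrite /supnorm; apply: bigmax_le. Qed.

Lemma supnorm_ge0 (x : S -> R) : 0 <= supnorm x.
Proof. rewrite /supnorm; elim/big_ind: _ => //= a b ha hb; by rewrite le_max ha. Qed.

Lemma range_bounded (g : S -> R) : has_ubound (range g) /\ has_lbound (range g).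
Proof.
split.
  exists (supnorm g) => _ [s _ <-]; exact: le_trans (ler_norm _) (le_supnorm g s).
exists (- supnorm g) => _ [s _ <-].
have := le_supnorm g s; rewrite ler_norml => /andP[h _]; exact: h.
Qed.

Lemma sp_le (f g : S -> R) c1 c2 (s0 : S) :
  (forall s, g s - c1 <= f s) -> (forall s, f s <= g s + c2) ->
  spnorm f <= spnorm g + c1 + c2.
Proof.
move=> Hl Hu; rewrite /spnorm.
have [gu gl] := range_bounded g.
have h1 : sup (range f) <= sup (range g) + c2.
  apply: ge_sup; first by exists (f s0), s0.
  move=> _ [s _ <-]; apply: le_trans (Hu s) _; rewrite lerD2r.
  by apply: ub_le_sup => //; exists s.
have h2 : inf (range g) - c1 <= inf (range f).
  apply: lb_le_inf; first by exists (f s0), s0.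
  move=> _ [s _ <-]; apply: le_trans _ (Hl s); rewrite lerD2r.
  by apply: ge_inf => //; exists s.
lra.
Qed.

Lemma sqrt_sub (u v : R) : 0 <= v -> Num.sqrt (u + v) <= Num.sqrt u + Num.sqrt v.
Proof.
move=> v0; case: (lerP 0 u) => u0.
  have su := sqrtr_ge0 u; have sv := sqrtr_ge0 v.
  rewrite -(ger0_norm (addr_ge0 su sv)) -sqrtr_sqr ler_sqrt; last exact: sqr_ge0.
  have := sqr_sqrtr u0; have := sqr_sqrtr v0; rewrite !expr2 => h1 h2.
  have : 0 <= Num.sqrt u * Num.sqrt v by apply: mulr_ge0.
  nra.
apply: le_trans (ler_wsqrtr _) _; first by apply: (_ : u + v <= v); lra.
by rewrite lerDr sqrtr_ge0.
Qed.

Lemma sq_mono (a m u w : R) : 0 <= a -> 0 < m -> u <= w ->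
  a * Num.sqrt (u / m) <= a * Num.sqrt (w / m).
Proof.
move=> a0 m0 uw; apply: ler_wpM2l => //; apply: ler_wsqrtr.
by rewrite ler_pM2r // invr_gt0.
Qed.

Lemma sq_split (a m u v : R) : 0 <= a -> 0 < m -> 0 <= v ->
  a * Num.sqrt ((u + v) / m) <= a * Num.sqrt (u / m) + a * Num.sqrt (v / m).
Proof.
move=> a0 m0 v0; rewrite -mulrDr; apply: ler_wpM2l => //.
rewrite mulrDl; apply: sqrt_sub; apply: mulr_ge0 => //; rewrite invr_ge0 ltW //.
Qed.

Lemma final_alg (a m D q y E : R) : 0 < m -> 0 <= a -> 0 <= y ->
  y ^+ 2 = 2 * D / m -> D <= E + 1 / m -> E <= 2 * a * q + a * y ->
  D <= 2 * a ^+ 2 / m + 4 * a * q + 4 / m.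
Proof.
move=> m0 a0 y0 hy h1 h2.
set im := 1 / m in h1 *.
have mim : m * im = 1 by rewrite /im mul1r mulfV // gt_eqF.
have im0 : 0 < im by rewrite /im mul1r invr_gt0.
have hy' : y ^+ 2 * m = 2 * D.
  by rewrite hy -mulrA mulVf ?mulr1 // gt_eqF.
have k : a * y * m <= a ^+ 2 + m * D / 2.
  have : 0 <= (a - m * y / 2) ^+ 2 by apply: sqr_ge0.
  rewrite !expr2 in hy' *. nra.
have k2 : a * y <= a ^+ 2 * im + D / 2.
  have := ler_wpM2r (ltW im0) k; rewrite mulrDl.
  have -> : a * y * m * im = a * y by rewrite -mulrA mim mulr1.
  by have -> : m * D / 2 * im = D / 2 by rewrite [LHS]mulrC !mulrA [im * m]mulrC mim mul1r.
have -> : 2 * a ^+ 2 / m = 2 * (a ^+ 2 * im) by rewrite /im mul1r mulrA.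
have -> : 4 / m = 4 * im by rewrite /im mul1r.
lra.
Qed.

End Aux.
Local Close Scope classical_set_scope.

Theorem lemma7 (R : realType) (S A : finType)
  (P Pbar : S -> A -> S -> R) (r : S -> A -> R)
  (m beta gamma : R) (pistar pi : S -> A -> R) :
  is_kernel P -> is_kernel Pbar -> reward01 r ->
  1 < m -> 1 < beta -> 0 < gamma < 1 ->
  is_optimal P r gamma pistar ->
  is_policy pi ->
  supnorm (fun s => Vpi P r gamma pistar s - Vpi Pbar r gamma pistar s)
    <= beta / (1 - gamma) *
       Num.sqrt ((spnorm (Vpi P r gamma pistar) + 1) / m) ->
  (forall s, Vpi Pbar r gamma pi s >= Vstar Pbar r gamma s - 1 / m) ->
  supnorm (fun s => Vpi Pbar r gamma pi s - Vpi P r gamma pi s)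
    <= beta / (1 - gamma) *
       Num.sqrt ((spnorm (Vpi Pbar r gamma pi) + 1) / m) ->
  supnorm (fun s => Vstar Pbar r gamma s - Vstar P r gamma s)
    <= 2 * beta ^+ 2 / ((1 - gamma) ^+ 2 * m)
       + 4 * beta / (1 - gamma) *
         Num.sqrt ((spnorm (Vstar P r gamma) + 1 + 1 / m) / m)
       + 4 / m
  /\
  supnorm (fun s => Vstar Pbar r gamma s - Vstar P r gamma s)
    <= 2 * beta ^+ 2 / ((1 - gamma) ^+ 2 * m)
       + 4 * beta / (1 - gamma) *
         Num.sqrt ((spnorm (Vstar Pbar r gamma) + 1 + 1 / m) / m)
       + 4 / m.
Proof.
move=> HP HPb Hr m1 b1 Hg [Hps Hopt] Hpi H1 H2 H3.
have /andP[g0 g1] := Hg.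
have m0 : 0 < m by apply: lt_trans m1.
have im0 : 0 < 1 / m by rewrite mul1r invr_gt0.
set a := beta / (1 - gamma).
have a0 : 0 <= a by rewrite /a divr_ge0 // ?subr_ge0 ltW // (lt_trans ltr01 b1).
have -> : 2 * beta ^+ 2 / ((1 - gamma) ^+ 2 * m) = 2 * a ^+ 2 / m.
  by rewrite /a expr_div_n invfM !mulrA.
have -> : 4 * beta / (1 - gamma) = 4 * a by rewrite /a mulrA.
set Vs := Vstar P r gamma; set Vbs := Vstar Pbar r gamma.
have EVs : Vpi P r gamma pistar = Vs by apply: funext => s; exact: Hopt.
rewrite EVs in H1.
set Vbps := Vpi Pbar r gamma pistar in H1.
set Vp := Vpi P r gamma pi in H3.
set Vbp := Vpi Pbar r gamma pi in H2 H3.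
rewrite -/Vbs in H2.
have le1 s : Vbps s <= Vbs s by exact: Vpi_le_Vstar.
have le2 s : Vp s <= Vs s by exact: Vpi_le_Vstar.
have le3 s : Vbp s <= Vbs s by exact: Vpi_le_Vstar.
set e1 := a * _ in H1; set e2 := a * _ in H3.
have e10 : 0 <= e1 by apply: mulr_ge0 => //; apply: sqrtr_ge0.
have e20 : 0 <= e2 by apply: mulr_ge0 => //; apply: sqrtr_ge0.
have p1 s : `|Vs s - Vbps s| <= e1 := le_trans (le_supnorm _ s) H1.
have p3 s : `|Vbp s - Vp s| <= e2 := le_trans (le_supnorm _ s) H3.
set D := supnorm _.
have D0 : 0 <= D by apply: supnorm_ge0.
have pd s : `|Vbs s - Vs s| <= D by exact: (le_supnorm (fun s => Vbs s - Vs s) s).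
have HD : D <= (e1 + e2) + 1 / m.
  apply: supnorm_le; first lra.
  move=> s /=; rewrite ler_norml; have := p1 s; have := p3 s; rewrite !ler_norml => /andP[h1 h2] /andP[h3 h4].
  have := le1 s; have := le3 s; have := le2 s; have := H2 s.
  move=> *; apply/andP; split; lra.
have rhs0 (X : R) : 0 <= 2 * a ^+ 2 / m + 4 * a * Num.sqrt (X / m) + 4 / m.
  have h1 : 0 <= 2 * a ^+ 2 / m by apply: divr_ge0; [apply: mulr_ge0 => //; exact: sqr_ge0|exact: ltW].
  have h2 : 0 <= 4 * a * Num.sqrt (X / m) by apply: mulr_ge0; [apply: mulr_ge0|apply: sqrtr_ge0].
  have h3 : 0 <= 4 / m by apply: divr_ge0 => //; exact: ltW.
  lra.
case: (pickP (fun _ : S => true)) => [s0 _|S0]; last first.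
  split; apply: supnorm_le => // s; by have := S0 s.
have hy : Num.sqrt (2 * D / m) ^+ 2 = 2 * D / m.
  by apply: sqr_sqrtr; apply: divr_ge0; [apply: mulr_ge0|apply: ltW].
have y0 := sqrtr_ge0 (2 * D / m).
have pdl s : Vs s - D <= Vbs s /\ Vbs s <= Vs s + D.
  by have := pd s; rewrite ler_norml => /andP[h h']; split; lra.
split.
- apply: (final_alg m0 a0 y0 hy HD).
  have k1 : e1 <= a * Num.sqrt ((spnorm Vs + 1 + 1 / m) / m).
    apply: sq_mono => //; lra.
  have sp1 : spnorm Vbp <= spnorm Vs + (D + 1 / m) + D.
    apply: (sp_le s0) => s; have := pdl s; have := le3 s; have := H2 s; lra.
  have k2 : e2 <= a * Num.sqrt ((spnorm Vs + 1 + 1 / m) / m) + a * Num.sqrt (2 * D / m).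
    apply: le_trans (sq_split _ _ _ _) => //; last by apply: mulr_ge0.
    apply: sq_mono => //; lra.
  lra.
- apply: (final_alg m0 a0 y0 hy HD).
  have sp2 : spnorm Vbp <= spnorm Vbs + 1 / m + 0.
    apply: (sp_le s0) => s; have := le3 s; have := H2 s; lra.
  have k2 : e2 <= a * Num.sqrt ((spnorm Vbs + 1 + 1 / m) / m).
    apply: sq_mono => //; lra.
  have sp1 : spnorm Vs <= spnorm Vbs + D + D.
    apply: (sp_le s0) => s; have := pdl s; lra.
  have k1 : e1 <= a * Num.sqrt ((spnorm Vbs + 1 + 1 / m) / m) + a * Num.sqrt (2 * D / m).
    apply: le_trans (sq_split _ _ _ _) => //; last by apply: mulr_ge0.
    apply: sq_mono => //; lra.
  lra.
Qed.
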